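(* There is a universal constant $C\ge 2$ such that the following holds. Let $L,M,n\ge1$. For every unsatisfiable CNF $F$ over $n$ variables and every $s_F\ge C\cdot(nLM+|F|)$ such that every resolution refutation of $F$ has more than $s_F$ clauses, there is a decision tree reduction of block-depth $O(n)$ from $\mathrm{rwPHP}(\mathsf{PLS})$ instances with parameters $L,M$ to $\textsc{Refuter}(s(F\vdash_{\mathsf{Res}}\bot)\le s_F)$.
   Context: $[n]=\{0,\dots,n-1\}$; $|F|$ is the number of clauses of $F$. $\textsc{Iter}$ on $[L]$: input $S:[L]\to[L]$; a solution is $x$ with $x=0\wedge S(0)=0$, or $S(x)<x$, or $S(x)>x\wedge S(S(x))=S(x)$. $\mathrm{rwPHP}(\mathsf{PLS})$ with parameters $L,M$: input consists of $f:[M]\to[2M]$; for each $y\in[2M]$ an $\textsc{Iter}$ instance $S_y:[L]\to[L]$; and for each $y$ a function $g_y:[L]\to[M]$. A solution is a pair $(y,a)$ with $a$ a solution of the $\textsc{Iter}$ instance $S_y$ and $f(g_y(a))\ne y$. Resolution refutation format: axioms $C_{-m},\dots,C_{-1}$ are the clauses of $F$; a purported refutation is a sequence of nodes $C_0,\dots,C_{L'-1}$, each with a set of literals, a tag ``resolution'' (with indices $-m\le j,k<i$ and a variable $x_a$) or ``weakening'' (with an index $-m\le j<i$). Node $i$ is valid if for resolution $C_j=x_a\vee D$, $C_k=\overline{x}_a\vee E$, $C_i=D\vee E$; for weakening $C_i=C_j\vee D$; and $C_{L'-1}=\bot$. $\textsc{Refuter}(s(F\vdash_{\mathsf{Res}}\bot)\le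 s_F)$: input is a purported refutation of $F$ with at most $s_F$ nodes; a solution is an index of an invalid node. Each node is a block; block-depth counts distinct blocks queried, and a decision tree reduction computes each node of the output and maps solutions back via decision trees on the input. *)

(* Defs.v *)
From mathcomp Require Import all_boot.
Set Implicit Arguments.
Unset Strict Implicit.
Unset Printing Implicit Defensive.

(* A literal is (variable, polarity): (a, true) = x_a, (a, false) = ~x_a. *)
Definition lit (n : nat) := ('I_n * bool)%type.
Definition clause (n : nat) := {set lit n}.
Definition cnf (n : nat) := seq (clause n).

Definition pos_lit (n : nat) (a : 'I_n) : lit n := (a, true).
Definition neg_lit (n : nat) (a : 'I_n) : lit n := (a, false).

Definition sat_lit (n : nat) (sigma : 'I_n -> bool) (l : lit n) : bool :=
  sigma l.1 == l.2.
Definition sat_clause (n : nat) (sigma : 'I_n -> bool) (C : clause n) : bool :=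
  [exists l in C, sat_lit sigma l].
Definition unsat_cnf (n : nat) (F : cnf n) : Prop :=
  forall sigma : 'I_n -> bool, ~~ all (sat_clause sigma) F.

(* A reference to an earlier line: inl a = axiom (a-th clause of F, i.e. one of
   C_{-m},...,C_{-1}), inr j = node C_j. *)
Inductive rule (m s n : nat) : Type :=
| Resol of ('I_m + 'I_s) & ('I_m + 'I_s) & 'I_n
| Weaken of ('I_m + 'I_s).

Record rnode (m s n : nat) : Type := RNode {
  rn_clause : clause n;
  rn_rule : rule m s n }.

Arguments Resol {m s n}.
Arguments Weaken {m s n}.
Arguments RNode {m s n}.
Arguments rn_clause {m s n}.
Arguments rn_rule {m s n}.

Definition pref (n : nat) (F : cnf n) (s : nat) := 'I_s -> rnode (size F) s n.

Definition ref_clause (n : nat) (F : cnf n) (s : nat) (P : pref F s)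
  (r : 'I_(size F) + 'I_s) : clause n :=
  match r with inl a => nth set0 F a | inr j => rn_clause (P j) end.

(* the reference points to an index -m <= j < i *)
Definition ref_before (m s : nat) (i : 'I_s) (r : 'I_m + 'I_s) : bool :=
  match r with inl _ => true | inr j => (j < i)%N end.

Definition node_valid (n : nat) (F : cnf n) (s : nat) (P : pref F s) (i : 'I_s)
  : Prop :=
  (match rn_rule (P i) with
   | Resol j k a =>
       ref_before i j /\ ref_before i k /\
       exists D E : clause n,
         ref_clause P j = pos_lit a |: D /\
         ref_clause P k = neg_lit a |: E /\
         rn_clause (P i) = D :|: E
   | Weaken j =>
       ref_before i j /\
       exists D : clause n, rn_clause (P i) = ref_clause P j :|: D
   end) /\
  ((i : nat) = s.-1 -> rn_clause (P i) = set0).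

Definition is_refutation (n : nat) (F : cnf n) (s : nat) (P : pref F s) : Prop :=
  (0 < s)%N /\ forall i, node_valid P i.

Definition res_size_gt (n : nat) (F : cnf n) (sF : nat) : Prop :=
  forall (s : nat) (P : pref F s), is_refutation P -> (sF < s)%N.

(* Queries q : Q, the answer to query q lies in A q; an input is x : forall q, A q. *)
Inductive dtree (Q : Type) (A : Q -> Type) (R : Type) : Type :=
| DLeaf of R
| DQuery (q : Q) of (A q -> dtree A R).
Arguments DLeaf {Q A R}.
Arguments DQuery {Q A R}.

Fixpoint dt_eval (Q : Type) (A : Q -> Type) (R : Type) (x : forall q, A q)
  (t : dtree A R) : R :=
  match t with DLeaf r => r | DQuery q k => dt_eval x (k (x q)) end.

Fixpoint dt_queries (Q : Type) (A : Q -> Type) (R : Type) (x : forall q, A q)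
  (t : dtree A R) : seq Q :=
  match t with DLeaf _ => [::] | DQuery q k => q :: dt_queries x (k (x q)) end.

Definition dt_blockdepth_le (Q : eqType) (A : Q -> Type) (R : Type)
  (t : dtree A R) (d : nat) : Prop :=
  forall x : forall q, A q, (size (undup (dt_queries x t)) <= d)%N.

Record rw_inst (L M : nat) : Type := RwInst {
  rw_f : 'I_M -> 'I_(2 * M);
  rw_S : 'I_(2 * M) -> 'I_L -> 'I_L;
  rw_g : 'I_(2 * M) -> 'I_L -> 'I_M }.
Arguments rw_f {L M}.
Arguments rw_S {L M}.
Arguments rw_g {L M}.

(* blocks: f(x), S_y(a), g_y(a) *)
Definition rw_query (L M : nat) :=
  ('I_M + ('I_(2 * M) * 'I_L) + ('I_(2 * M) * 'I_L))%type.

Definition rw_ans (L M : nat) (q : rw_query L M) : Type :=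
  match q with
  | inl (inl _) => 'I_(2 * M)
  | inl (inr _) => 'I_L
  | inr _ => 'I_M
  end.

Definition rw_oracle (L M : nat) (x : rw_inst L M) : forall q, rw_ans q :=
  fun q => match q as q0 return rw_ans q0 with
           | inl (inl a) => rw_f x a
           | inl (inr p) => rw_S x p.1 p.2
           | inr p => rw_g x p.1 p.2
           end.

Definition iter_sol (L : nat) (S : 'I_L -> 'I_L) (a : 'I_L) : bool :=
  [|| ((a : nat) == 0) && ((S a : nat) == 0),
      (S a < a)%N
    | (a < S a)%N && (S (S a) == S a)].

Definition rw_sol (L M : nat) (x : rw_inst L M) (ya : 'I_(2 * M) * 'I_L) : bool :=
  iter_sol (rw_S x ya.1) ya.2 && (rw_f x (rw_g x ya.1 ya.2) != ya.1).

(* A decision tree reduction of block-depth <= d from rwPHP(PLS)[L,M] to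
   Refuter(s(F |-Res bot) <= sF): each output node is computed by a decision tree
   on the rwPHP input, and each Refuter solution (an invalid node index) is mapped
   back to an rwPHP solution by a decision tree on the rwPHP input. *)
Definition rw_refuter_reduction (L M n : nat) (F : cnf n) (sF d : nat) : Prop :=
  exists (out : 'I_sF -> dtree (@rw_ans L M) (rnode (size F) sF n))
         (back : 'I_sF -> dtree (@rw_ans L M) ('I_(2 * M) * 'I_L)%type),
    (forall i, dt_blockdepth_le (out i) d /\ dt_blockdepth_le (back i) d) /\
    (forall (x : rw_inst L M) (i : 'I_sF),
        ~ node_valid (F := F) (fun j => dt_eval (rw_oracle x) (out j)) i ->
        rw_sol x (dt_eval (rw_oracle x) (back i))).

(* Main.v *)
Require Import Defs.
From mathcomp Require Import all_boot zify.
Set Implicit Arguments. Unset Strict Implicit. Unset Printing Implicit Defensive.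

Fixpoint dbind (Q : Type) (A : Q -> Type) (R R' : Type) (t : dtree A R) (k : R -> dtree A R') : dtree A R' :=
  match t with DLeaf r => k r | DQuery q c => DQuery q (fun a => dbind (c a) k) end.

Lemma eval_bind (Q : Type) (A : Q -> Type) (R R' : Type) x (t : dtree A R) (k : R -> dtree A R') :
  dt_eval x (dbind t k) = dt_eval x (k (dt_eval x t)).
Proof. by elim: t => //= q c IH; rewrite IH. Qed.

Lemma queries_bind (Q : Type) (A : Q -> Type) (R R' : Type) x (t : dtree A R) (k : R -> dtree A R') :
  dt_queries x (dbind t k) = dt_queries x t ++ dt_queries x (k (dt_eval x t)).
Proof. by elim: t => //= q c IH; rewrite IH. Qed.

Lemma yof_proof (M : nat) (x : 'I_M) (b : bool) : x + b * M < 2 * M.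
Proof. have := ltn_ord x; case: b => /=; lia. Qed.
Definition yof M (x : 'I_M) b : 'I_(2*M) := Ordinal (yof_proof x b).
Lemma xof_proof M (y : 'I_(2*M)) : (if y < M then (y:nat) else y - M) < M.
Proof. have := ltn_ord y; case: ifP => h; lia. Qed.
Definition xof M (y : 'I_(2*M)) : 'I_M := Ordinal (xof_proof y).
Definition bof M (y : 'I_(2*M)) : bool := M <= y.
Lemma xof_yof M (x : 'I_M) b : xof (yof x b) = x.
Proof. apply: val_inj => /=; have := ltn_ord x; case: b => /=; case: ifP; lia. Qed.
Lemma bof_yof M (x : 'I_M) b : bof (yof x b) = b.
Proof. rewrite /bof /=; have := ltn_ord x; case: b => /=; lia. Qed.

Definition cl n (s : seq bool) : clause n :=
  [set l : lit n | (l.1 < size s) && (l.2 == ~~ nth false s l.1)].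
Lemma cl_rcons n (s : seq bool) b (v : 'I_n) : val v = size s ->
  cl n (rcons s b) = (v, ~~ b) |: cl n s.
Proof.
move=> hv; apply/setP => [[w p]]; rewrite !inE /= size_rcons nth_rcons.
have hwv : (w == v) = (val w == size s) by rewrite -hv.
rewrite xpair_eqE hwv.
case: (ltngtP w (size s)) => h.
- by rewrite ltnS (ltnW h) /=.
- by rewrite ltnS leqNgt h.
- by rewrite h ltnSn /= orbF.
Qed.

Lemma cl_nil n : cl n [::] = set0.
Proof. by apply/setP => l; rewrite !inE. Qed.

Definition ordm (N : nat) (H : 0 < N) (v : nat) : 'I_N := Ordinal (ltn_pmod v H).

Fixpoint dec L M (I : rw_inst L M) (k : nat) (z : 'I_M) : seq bool :=
  match k with 0 => [::]
  | k'.+1 => rcons (dec I k' (xof (rw_f I z))) (bof (rw_f I z)) end.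

Fixpoint decT L M (k : nat) (z : 'I_M) : dtree (@rw_ans L M) (seq bool) :=
  match k with 0 => DLeaf [::]
  | k'.+1 => DQuery (inl (inl z) : rw_query L M)
       (fun y : 'I_(2*M) => dbind (decT L k' (xof y)) (fun s => DLeaf (rcons s (bof y)))) end.

Lemma decT_eval L M (I : rw_inst L M) k z : dt_eval (rw_oracle I) (@decT L M k z) = dec I k z.
Proof. by elim: k z => //= k IH z; rewrite eval_bind IH. Qed.

Lemma decT_q L M x k z : size (dt_queries x (@decT L M k z)) = k.
Proof. by elim: k z => //= k IH z; rewrite queries_bind size_cat IH /= addn0. Qed.

Lemma size_dec L M (I : rw_inst L M) k z : size (dec I k z) = k.
Proof. by elim: k z => //= k IH z; rewrite size_rcons IH. Qed.

Definition sig n (s : seq bool) : 'I_n -> bool := fun v => nth false s v.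

Definition axidx n (F : cnf n) (HF : 0 < size F) (s : seq bool) : 'I_(size F) :=
  ordm HF (find (fun C => ~~ sat_clause (@sig n s) C) F).

Lemma axidxP n (F : cnf n) (HF : 0 < size F) s : unsat_cnf F -> size s = n ->
  nth set0 F (axidx HF s) \subset cl n s.
Proof.
move=> hu hs.
have hh : has (fun C => ~~ sat_clause (@sig n s) C) F.
  by have := hu (@sig n s); rewrite -has_predC.
have := nth_find set0 hh; rewrite has_find in hh.
rewrite /axidx /= modn_small //.
move=> hn; apply/subsetP => l hl; rewrite inE hs ltn_ord /=.
move: hn; rewrite /sat_clause negb_exists => /forallP /(_ l).
rewrite hl /= /sat_lit /sig.
by case: l hl => [v p] /= _; case: p; case: (nth false s v).
Qed.

Definition Wd m l := m.+1 + 2 * m.+1 * l.+1.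

Inductive kind m l := KSlot of nat & 'I_m.+1 | KQ of nat & 'I_(2 * m.+1) & 'I_l.+1 | KPad.
Arguments KPad {m l}.

Lemma pos2M m : 0 < 2 * m.+1. Proof. by []. Qed.

Definition classify (n m l : nat) (r : nat) : kind m l :=
  let k := r %/ Wd m l in let o := r %% Wd m l in
  if o < m.+1 then (if k <= n.+1 then KSlot l k (inord o) else KPad)
  else if k < n.+1 then KQ k (ordm (pos2M m) (o - m.+1)) (inord ((o - m.+1) %/ (2 * m.+1)))
  else KPad.

Definition rslot m l k (x : nat) := k * Wd m l + x.
Definition rQ m l k (y a : nat) := k * Wd m l + m.+1 + a * (2 * m.+1) + y.

Definition refpos n (F : cnf n) sF (i : 'I_sF) (r : nat) : 'I_(size F) + 'I_sF :=
  inr (insubd i (sF.-1 - r)).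

Definition outT (n m l : nat) (F : cnf n.+1) (HF : 0 < size F) (sF : nat) (i : 'I_sF)
  : dtree (@rw_ans l.+1 m.+1) (rnode (size F) sF n.+1) :=
  let ax0 : 'I_(size F) + 'I_sF := inl (ordm HF 0) in
  match classify n m l (sF.-1 - i) with
  | KSlot k x => dbind (@decT l.+1 m.+1 k x) (fun s => DLeaf (RNode (cl n.+1 s)
       (if k < n.+1 then Resol (refpos F i (rQ m l k (yof x false) 0))
                               (refpos F i (rQ m l k (yof x true) 0)) (inord k)
        else Weaken (inl (axidx HF s)))))
  | KQ k y a =>
      DQuery (inr (y, a) : rw_query l.+1 m.+1) (fun z : 'I_m.+1 =>
      DQuery (inl (inl z) : rw_query l.+1 m.+1) (fun fz : 'I_(2 * m.+1) =>
      DQuery (inl (inr (y, a)) : rw_query l.+1 m.+1) (fun sa : 'I_l.+1 =>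
      dbind (@decT l.+1 m.+1 k (xof y)) (fun d => DLeaf (RNode
        (if (fz != y) && (sa == a) && (a != 0 :> nat) then setT else cl n.+1 (rcons d (bof y)))
        (if fz == y then Weaken (refpos F i (rslot m l k.+1 z))
         else if a < sa then Weaken (refpos F i (rQ m l k y sa))
         else Weaken ax0))))))
  | KPad => DLeaf (RNode setT (Weaken ax0))
  end.

Definition backT (n m l : nat) (sF : nat) (i : 'I_sF)
  : dtree (@rw_ans l.+1 m.+1) ('I_(2 * m.+1) * 'I_l.+1)%type :=
  match classify n m l (sF.-1 - i) with
  | KQ k y a => DLeaf (y, a)
  | _ => DLeaf (yof ord0 false, ord0)
  end.

Lemma Wd_gt m l : m.+1 <= Wd m l.
Proof. rewrite /Wd; lia. Qed.

Lemma QoffP m l (y : 'I_(2 * m.+1)) (a : 'I_l.+1) : a * (2 * m.+1) + y < 2 * m.+1 * l.+1.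
Proof.
have h1 := ltn_ord y; have h2 := ltn_ord a.
move: (nat_of_ord y) (nat_of_ord a) h1 h2 => yy aa h1 h2.
apply: (@leq_trans (aa.+1 * (2 * m.+1))); first by rewrite mulSn; lia.
by rewrite mulnC leq_mul2l h2 orbT.
Qed.

Lemma divmodW m l k o : o < Wd m l -> (k * Wd m l + o) %/ Wd m l = k /\ (k * Wd m l + o) %% Wd m l = o.
Proof.
move=> ho; have hW : 0 < Wd m l by rewrite /Wd.
by rewrite divnMDl // divn_small // addn0 modnMDl modn_small.
Qed.

Lemma classify_slot n m l k (x : 'I_m.+1) : k <= n.+1 ->
  classify n m l (rslot m l k x) = KSlot l k x.
Proof.
move=> hk; have hx := ltn_ord x; have hW := Wd_gt m l.
rewrite /classify /rslot; have [-> ->] := divmodW k (leq_trans hx hW).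
by rewrite hx hk inord_val.
Qed.

Lemma classify_Q n m l k (y : 'I_(2 * m.+1)) (a : 'I_l.+1) : k < n.+1 ->
  classify n m l (rQ m l k y a) = KQ k y a.
Proof.
move=> hk; have ho := QoffP y a.
rewrite /classify /rQ -!addnA.
have hoW : m.+1 + (a * (2 * m.+1) + y) < Wd m l by rewrite /Wd ltn_add2l.
have [-> ->] := divmodW k hoW.
rewrite ltnNge leq_addr /= hk addKn.
have hy := ltn_ord y; have hp := pos2M m.
congr KQ.
- by apply: val_inj; rewrite /= modnMDl modn_small.
- by apply: val_inj; rewrite /= divnMDl // divn_small // addn0 inordK // ltn_ord.
Qed.

Lemma classify_slotE n m l r k x : classify n m l r = KSlot l k x ->
  k <= n.+1 /\ r = rslot m l k x.
Proof.
rewrite /classify /rslot; case: ifP => ho; last by case: ifP.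
case: ifP => hk // [<- <-]; split => //.
by rewrite inordK // {1}(divn_eq r (Wd m l)).
Qed.

Lemma classify_QE n m l r k y a : classify n m l r = KQ k y a ->
  k < n.+1 /\ r = rQ m l k y a.
Proof.
rewrite /classify /rQ; case: ifP => ho; first by case: ifP.
case: ifP => hk // [<- <- <-]; split => //.
have hp := pos2M m.
have hlt : (r %% Wd m l - m.+1) %/ (2 * m.+1) < l.+1.
  rewrite ltn_divLR //; have := ltn_pmod r (leq_trans (ltn0Sn m) (Wd_gt m l)).
  rewrite /Wd mulnC; lia.
rewrite /= inordK // {1}(divn_eq r (Wd m l)).
have e := divn_eq (r %% Wd m l - m.+1) (2 * m.+1).
move/negbT: ho; rewrite -leqNgt => ho. by rewrite -!addnA -e subnKC.
Qed.

Lemma out_slot n m l (F : cnf n.+1) (HF : 0 < size F) sF (i : 'I_sF) (I : rw_inst l.+1 m.+1) k x :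
  classify n m l (sF.-1 - i) = KSlot l k x ->
  dt_eval (rw_oracle I) (@outT n m l F HF sF i) =
  RNode (cl n.+1 (dec I k x))
       (if k < n.+1 then Resol (refpos F i (rQ m l k (yof x false) 0))
                               (refpos F i (rQ m l k (yof x true) 0)) (inord k)
        else Weaken (inl (axidx HF (dec I k x)))).
Proof. by move=> hc; rewrite /outT hc eval_bind decT_eval. Qed.

Lemma out_Q n m l (F : cnf n.+1) (HF : 0 < size F) sF (i : 'I_sF) (I : rw_inst l.+1 m.+1) k y a :
  classify n m l (sF.-1 - i) = KQ k y a ->
  dt_eval (rw_oracle I) (@outT n m l F HF sF i) =
  RNode (if (rw_f I (rw_g I y a) != y) && (rw_S I y a == a) && (a != 0 :> nat) then setT
         else cl n.+1 (rcons (dec I k (xof y)) (bof y)))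
        (if rw_f I (rw_g I y a) == y then Weaken (refpos F i (rslot m l k.+1 (rw_g I y a)))
         else if a < rw_S I y a then Weaken (refpos F i (rQ m l k y (rw_S I y a)))
         else Weaken (inl (ordm HF 0))).
Proof. by move=> hc; rewrite /outT hc /= eval_bind decT_eval. Qed.

Lemma out_pad n m l (F : cnf n.+1) (HF : 0 < size F) sF (i : 'I_sF) (I : rw_inst l.+1 m.+1) :
  classify n m l (sF.-1 - i) = KPad ->
  dt_eval (rw_oracle I) (@outT n m l F HF sF i) = RNode setT (Weaken (inl (ordm HF 0))).
Proof. by move=> hc; rewrite /outT hc. Qed.

Lemma back_Q n m l sF (i : 'I_sF) (I : rw_inst l.+1 m.+1) k y a :
  classify n m l (sF.-1 - i) = KQ k y a ->
  dt_eval (rw_oracle I) (@backT n m l sF i) = (y, a).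
Proof. by move=> hc; rewrite /backT hc. Qed.

Lemma refposP n (F : cnf n) sF (i : 'I_sF) r : r <= sF.-1 ->
  exists j : 'I_sF, refpos F i r = inr j /\ val j = sF.-1 - r /\ sF.-1 - j = r.
Proof.
move=> hr; have hs := ltn_ord i.
move: i hs hr; case: sF => [[]//|s0] i hs /= hr.
exists (insubd i (s0 - r)); split => //.
have e : val (insubd i (s0 - r)) = s0 - r by rewrite val_insubd ifT //; lia.
by rewrite e; split => //; lia.
Qed.

Lemma rQ_lt m l k (y : 'I_(2 * m.+1)) (a : 'I_l.+1) : rQ m l k y a < k.+1 * Wd m l.
Proof.
have := QoffP y a; rewrite /rQ; move: (nat_of_ord y) => yy.
rewrite (mulSnr k (Wd m l)); have hw : Wd m l = m.+1 + 2 * m.+1 * l.+1 by [].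
move: hw; move: (k * Wd m l) (Wd m l) (a * (2 * m.+1)) (2 * m.+1 * l.+1) => kw w p q; lia.
Qed.

Lemma mulW_le m l k k' : k <= k' -> k * Wd m l <= k' * Wd m l.
Proof. by move=> h; rewrite leq_mul2r h orbT. Qed.

Lemma rslot_lt m l n k (x : 'I_m.+1) : k <= n.+1 -> rslot m l k x < n.+1 * Wd m l + m.+1.
Proof.
move=> hk; have := mulW_le m l hk; have := ltn_ord x; rewrite /rslot.
move: (k * Wd m l) (n.+1 * Wd m l) (nat_of_ord x) => p q r; lia.
Qed.

Lemma rslot0 m l k (x : 'I_m.+1) : rslot m l k x = 0 -> k = 0.
Proof.
rewrite /rslot => h; have : k * Wd m l = 0 by lia.
by move/eqP; rewrite muln_eq0 /Wd orbF => /eqP.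
Qed.

Lemma main_valid n m l (F : cnf n.+1) (HF : 0 < size F) sF (hu : unsat_cnf F)
  (hsz : n.+1 * Wd m l + m.+1 <= sF.-1) (I : rw_inst l.+1 m.+1) (i : 'I_sF) :
  node_valid (F:=F) (fun j => dt_eval (rw_oracle I) (@outT n m l F HF sF j)) i \/
  rw_sol I (dt_eval (rw_oracle I) (@backT n m l sF i)).
Proof.
move: i hsz; case: sF => [[]//|s0] i /= hsz.
have hs := ltn_ord i.
set P := (fun j => _).
case hc: (classify n m l (s0 - i)) => [k x | k y a |].
-
  left; have [hk er] := classify_slotE hc.
  have hPi : P i = _ := out_slot HF I hc.
  split; last first.
    move=> hlast; have e0 : rslot m l k x = 0 by rewrite -er hlast subnn.
    by rewrite hPi (rslot0 e0) /= cl_nil.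
  move: hPi; case: ifP => hkn hPi.
  + have hr1 : rQ m l k (yof x false) 0 <= s0.
      have h1 : rQ m l k (yof x false) 0 < k.+1 * Wd m l := rQ_lt k (yof x false) ord0.
      have := mulW_le m l hkn; move: h1 hsz; move: (rQ m l k (yof x false) 0) (k.+1 * Wd m l) (n.+1 * Wd m l) => p q r; lia.
    have hr2 : rQ m l k (yof x true) 0 <= s0.
      have h1 : rQ m l k (yof x true) 0 < k.+1 * Wd m l := rQ_lt k (yof x true) ord0.
      have := mulW_le m l hkn; move: h1 hsz; move: (rQ m l k (yof x true) 0) (k.+1 * Wd m l) (n.+1 * Wd m l) => p q r; lia.
    have [j1 [e1 [hj1 hj1']]] := refposP F i hr1.
    have [j2 [e2 [hj2 hj2']]] := refposP F i hr2.
    rewrite e1 e2 in hPi; rewrite hPi; simpl rn_rule; simpl rn_clause.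
    have hx := ltn_ord x.
    have hlt1 : rslot m l k x < rQ m l k (yof x false) 0 by rewrite /rslot /rQ; lia.
    have hlt2 : rslot m l k x < rQ m l k (yof x true) 0 by rewrite /rslot /rQ; lia.
    split; first by rewrite /= hj1; move: er hlt1 hr1; move: (rQ m l k (yof x false) 0) (rslot m l k x) => p q; lia.
    split; first by rewrite /= hj2; move: er hlt2 hr2; move: (rQ m l k (yof x true) 0) (rslot m l k x) => p q; lia.
    have hc1 : classify n m l (s0 - j1) = KQ k (yof x false) ord0.
      by rewrite hj1'; exact: (@classify_Q n m l k (yof x false) ord0 hkn).
    have hc2 : classify n m l (s0 - j2) = KQ k (yof x true) ord0.
      by rewrite hj2'; exact: (@classify_Q n m l k (yof x true) ord0 hkn).
    exists (cl n.+1 (dec I k x)), (cl n.+1 (dec I k x)).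
    have hv : (inord k : 'I_n.+1) = size (dec I k x) :> nat by rewrite size_dec inordK.
    rewrite /ref_clause /P (out_Q HF I hc1) (out_Q HF I hc2).
    simpl rn_clause; rewrite !andbF !xof_yof !bof_yof.
    by rewrite !(cl_rcons _ hv) setUid.
  + rewrite hPi; simpl rn_rule; simpl rn_clause.
    split => //; exists (cl n.+1 (dec I k x)).
    have ek : k = n.+1 by apply/eqP; rewrite eqn_leq hk leqNgt hkn.
    by rewrite /ref_clause (setUidPr (axidxP HF hu _)) // size_dec ek.
-
  have [hk er] := classify_QE hc.
  rewrite (back_Q I hc) /rw_sol /=.
  have hPi : P i = _ := out_Q HF I hc.
  have hlast : (i : nat) = s0 -> False.
    by move=> h; move: er; rewrite h subnn /rQ; lia.
  have hW := rQ_lt k y a.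
  case ef: (rw_f I (rw_g I y a) == y).
  + left; rewrite ef /= in hPi; split; last by move/hlast.
    set z := rw_g I y a.
    have hr : rslot m l k.+1 z <= s0 by have := rslot_lt l z hk; lia.
    have [j [e1 [hj hj']]] := refposP F i hr.
    rewrite e1 in hPi; rewrite hPi; simpl rn_rule; simpl rn_clause.
    have hge : k.+1 * Wd m l <= rslot m l k.+1 z by rewrite /rslot leq_addr.
    split; first by rewrite /= hj; move: er hW hge hr; move: (rQ m l k y a) (k.+1 * Wd m l) (rslot m l k.+1 z) => p q r; lia.
    have hc1 : classify n m l (s0 - j) = KSlot l k.+1 z by rewrite hj'; exact: classify_slot.
    exists set0; rewrite setU0 /ref_clause /P (out_slot HF I hc1); simpl rn_clause.
    by rewrite /= (eqP ef).
  + case ea: (a < rw_S I y a).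
    * set sa := rw_S I y a.
      have hr : rQ m l k y sa <= s0.
        have := rQ_lt k y sa; have := mulW_le m l hk; lia.
      have [j [hjr [hj hj']]] := refposP F i hr.
      have hc1 : classify n m l (s0 - j) = KQ k y sa by rewrite hj'; exact: classify_Q.
      case hcond : ((rw_f I (rw_g I y sa) != y) && (rw_S I y sa == sa) && (sa != 0 :> nat)).
      - right; move: hcond => /andP [/andP [_ hss] _].
        by rewrite /iter_sol ea hss !orbT.
      - left.
        have hsa : (rw_S I y a == a) = false by apply/negbTE; rewrite neq_ltn ea orbT.
        rewrite ef ea hjr hsa andbF in hPi.
        rewrite /node_valid hPi; simpl rn_rule; simpl rn_clause; split; last by move/hlast.
        split.
          rewrite /= hj; move: er hr; rewrite /rQ.
          have : a * (2 * m.+1) < sa * (2 * m.+1) by rewrite ltn_pmul2r.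
          move: (a * (2 * m.+1)) (sa * (2 * m.+1)) => p q; lia.
        exists set0; rewrite setU0 /ref_clause /P (out_Q HF I hc1) hcond.
        by simpl rn_clause.
    * case h2 : ((rw_S I y a == a) && (a != 0 :> nat)).
      - left; rewrite ef ea /= h2 in hPi.
        rewrite /node_valid hPi; simpl rn_rule; simpl rn_clause; split; last by move/hlast.
        by split => //; exists setT; rewrite setUT.
      - right; rewrite /iter_sol.
        move: ea h2; case: (ltngtP a (rw_S I y a)) => // hlt _.
          by move=> _; rewrite /= orbT.
        have e : rw_S I y a = a by apply: val_inj; rewrite /= -hlt.
        move=> h; rewrite e eqxx /= in h; rewrite e (negbFE h).
        by [].
-
  left; have hPi : P i = _ := out_pad HF I hc.
  rewrite /node_valid hPi; simpl rn_rule; simpl rn_clause.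
  split; first by split => //; exists setT; rewrite setUT.
  move=> h; move: hc; rewrite h subnn.
  have := @classify_slot n m l 0 ord0 (leq0n _); rewrite /rslot mul0n addn0 => ->.
  by [].
Qed.

Lemma out_depth n m l (F : cnf n.+1) (HF : 0 < size F) sF (i : 'I_sF) x :
  size (dt_queries x (@outT n m l F HF sF i)) <= n.+1 + 3.
Proof.
rewrite /outT; case hc: (classify n m l (sF.-1 - i)) => [k z | k y a |] //=.
- have [hk _] := classify_slotE hc.
  by rewrite queries_bind size_cat decT_q /= addn0; lia.
- have [hk _] := classify_QE hc.
  by rewrite queries_bind size_cat decT_q /=; lia.
Qed.

Lemma back_depth n m l sF (i : 'I_sF) x :
  size (dt_queries x (@backT n m l sF i)) = 0.
Proof. by rewrite /backT; case: (classify n m l (sF.-1 - i)). Qed.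

Theorem theorem4p4 :
  exists C c : nat, (2 <= C)%N /\
    forall L M n : nat, (1 <= L)%N -> (1 <= M)%N -> (1 <= n)%N ->
    forall (F : cnf n) (sF : nat),
      unsat_cnf F ->
      (C * (n * L * M + size F) <= sF)%N ->
      res_size_gt F sF ->
      rw_refuter_reduction L M F sF (c * n).
Proof.
exists 4, 4; split => //.
move=> L M n hL hM hn F sF hu hsz _.
case: L hL hsz => // l _ hsz; case: M hM hsz => // m _ hsz.
move: F hu hsz; case: n hn => // n _ F hu hsz.
have HF : 0 < size F.
  case: F hu {hsz} => // hu; by have := hu (fun _ => true).
have hsz' : n.+1 * Wd m l + m.+1 <= sF.-1.
  rewrite /Wd; move: hsz HF; nia.
exists (fun i => @outT n m l F HF sF i), (fun i => @backT n m l sF i); split.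
- move=> i; split => x.
  + apply: leq_trans (size_undup _) _ => /=; have := @out_depth n m l F HF sF i x => h; apply: (leq_trans h); lia.
  + by apply: leq_trans (size_undup _) _; rewrite back_depth.
- move=> I i hnv; by case: (main_valid HF hu hsz' I i).
Qed.
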